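(* Let $(\mathcal{S},\mathcal{R})$ be an $r$-complete positive presentation. Then any two elements of $\mathrm{Mon}(\mathcal{S};\mathcal{R})$ admit a common right multiple if and only if the following condition holds: there exists a set $\mathcal{S}'$ with $\mathcal{S}\subseteq\mathcal{S}'\subseteq\mathcal{S}^*$ such that for all $u,v\in\mathcal{S}'$ there exist $u',v'\in\mathcal{S}'$ satisfying $(uv')^{-1}(vu')\curvearrowright_r\varepsilon$.
   Context: A positive presentation is a pair $(\mathcal{S},\mathcal{R})$ where $\mathcal{S}$ is a nonempty set of letters and $\mathcal{R}$ is a family of relations $u=v$, i.e. unordered pairs $\{u,v\}$ of nonempty words in the free monoid $\mathcal{S}^*$ (letters are regarded as length-one words). $\varepsilon$ denotes the empty word; $\equiv$ is the smallest congruence on $\mathcal{S}^*$ containing all pairs of $\mathcal{R}$, and $\mathrm{Mon}(\mathcal{S};\mathcal{R})=\mathcal{S}^*/{\equiv}$. An element $z$ is a common right multiple of $x,y$ if $z=xa=yb$ for some $a,b$. Let $\mathcal{S}^{-1}=\{s^{-1}:s\in\mathcal{S}\}$ be a disjoint copy of $\mathcal{S}$; for $u\in\mathcal{S}^*$, $u^{-1}$ is obtained by reversing the order of the letters of $u$ and replacing each $s$ by $s^{-1}$. Right reversing: for words $\mathbf{w},\mathbf{w}'$ on $\mathcal{S}\cup\mathcal{S}^{-1}$ we write $\mathbf{w}\curvearrowright_r\mathbf{w}'$ if $\mathbf{w}'$ is obtained from $\mathbf{w}$ by a finite (possibly empty) sequence of steps, each of which either deletes a subword $u^{-1}u$ with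 $u\in\mathcal{S}^*$ nonempty, or replaces a subword $u^{-1}v$ with $u,v\in\mathcal{S}^*$ nonempty by a word $v'u'^{-1}$ with $u',v'\in\mathcal{S}^*$ such that $uv'=vu'$ is a relation of $\mathcal{R}$. $(\mathcal{S},\mathcal{R})$ is $r$-complete if for all $u,v,u',v'\in\mathcal{S}^*$ with $uv'\equiv vu'$ there exist $u'',v'',w\in\mathcal{S}^*$ with $u^{-1}v\curvearrowright_r v''u''^{-1}$, $u'\equiv u''w$ and $v'\equiv v''w$. *)

(* Defs.v *)
From Stdlib Require Import List.
Import ListNotations.
Set Implicit Arguments.

(* A family of relations on S^* : R u v means the relation u = v belongs to the
   family. Relations are unordered pairs, so we symmetrize. *)
Definition relR {S : Type} (R : list S -> list S -> Prop) (x y : list S) : Prop :=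
  R x y \/ R y x.

Inductive cong {S : Type} (R : list S -> list S -> Prop) : list S -> list S -> Prop :=
| cong_base : forall u v, R u v -> cong R u v
| cong_refl : forall u, cong R u u
| cong_sym : forall u v, cong R u v -> cong R v u
| cong_trans : forall u v w, cong R u v -> cong R v w -> cong R u w
| cong_cat : forall u v u' v', cong R u v -> cong R u' v' -> cong R (u ++ u') (v ++ v').

(* Signed words: (true, s) is the letter s, (false, s) is s^{-1}. *)
Definition pos {S : Type} (u : list S) : list (bool * S) := map (fun s => (true, s)) u.
Definition inv {S : Type} (u : list S) : list (bool * S) := rev (map (fun s => (false, s)) u).

Inductive rstep {S : Type} (R : list S -> list S -> Prop) :
    list (bool * S) -> list (bool * S) -> Prop :=
| rstep_del : forall a b u, u <> [] ->
    rstep R (a ++ inv u ++ pos u ++ b) (a ++ b)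
| rstep_rel : forall a b u v u' v', u <> [] -> v <> [] ->
    relR R (u ++ v') (v ++ u') ->
    rstep R (a ++ inv u ++ pos v ++ b) (a ++ pos v' ++ inv u' ++ b).

Inductive reverses {S : Type} (R : list S -> list S -> Prop) :
    list (bool * S) -> list (bool * S) -> Prop :=
| rev_refl : forall w, reverses R w w
| rev_step : forall w w1 w2, rstep R w w1 -> reverses R w1 w2 -> reverses R w w2.

Definition r_complete {S : Type} (R : list S -> list S -> Prop) : Prop :=
  forall u v u' v' : list S, cong R (u ++ v') (v ++ u') ->
    exists u'' v'' w : list S,
      reverses R (inv u ++ pos v) (pos v'' ++ inv u'') /\
      cong R u' (u'' ++ w) /\ cong R v' (v'' ++ w).

(* Main.v *)
Require Import Defs.
From Stdlib Require Import List.
Import ListNotations.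

Section Aux.
Variable S : Type.
Variable R : list S -> list S -> Prop.

Fixpoint Tr (w : list (bool * S)) (x y : list S) : Prop :=
  match w with
  | [] => cong R x y
  | (true, s) :: w' => Tr w' (x ++ [s]) y
  | (false, s) :: w' => exists z, cong R (z ++ [s]) x /\ Tr w' z y
  end.

Lemma cg_app_l (a x y : list S) : cong R x y -> cong R (a ++ x) (a ++ y).
Proof. intro H. apply cong_cat; [apply cong_refl | exact H]. Qed.
Lemma cg_app_r (a x y : list S) : cong R x y -> cong R (x ++ a) (y ++ a).
Proof. intro H. apply cong_cat; [exact H | apply cong_refl]. Qed.

Lemma Tr_resp w : forall x y x' y', cong R x x' -> cong R y y' -> Tr w x y -> Tr w x' y'.
Proof.
  induction w as [|[[|] s] w IH]; simpl; intros x y x' y' Hx Hy H.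
  - eapply cong_trans; [apply cong_sym; exact Hx|]. eapply cong_trans; eauto.
  - eapply IH; [apply cg_app_r; exact Hx | exact Hy | exact H].
  - destruct H as [z [Hz H]]. exists z. split.
    + eapply cong_trans; eauto.
    + eapply IH; [apply cong_refl | exact Hy | exact H].
Qed.

Lemma Tr_app a : forall b x y, Tr (a ++ b) x y <-> exists m, Tr a x m /\ Tr b m y.
Proof.
  induction a as [|[[|] s] a IH]; simpl; intros b x y; split.
  - intro H. exists x. split; [apply cong_refl | exact H].
  - intros [m [Hm H]]. eapply Tr_resp; [apply cong_sym; exact Hm | apply cong_refl | exact H].
  - intro H. apply IH in H. exact H.
  - intro H. apply IH. exact H.
  - intros [z [Hz H]]. apply IH in H. destruct H as [m [H1 H2]].
    exists m. split; [exists z; auto | exact H2].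
  - intros [m [[z [Hz H1]] H2]]. exists z. split; [exact Hz|]. apply IH. eauto.
Qed.

Lemma Tr_pos v : forall x y, Tr (pos v) x y <-> cong R (x ++ v) y.
Proof.
  induction v as [|s v IH]; simpl; intros x y.
  - rewrite app_nil_r. tauto.
  - rewrite IH. rewrite <- app_assoc. simpl. tauto.
Qed.

Lemma Tr_inv u : forall x y, Tr (inv u) x y <-> cong R (y ++ u) x.
Proof.
  induction u as [|s u IH]; intros x y; unfold inv in *; simpl.
  - rewrite app_nil_r. split; apply cong_sym.
  - rewrite Tr_app. split.
    + intros [m [H1 [z [Hz H2]]]]. simpl in H2. apply IH in H1.
      eapply cong_trans; [|exact H1].
      replace (y ++ s :: u) with ((y ++ [s]) ++ u) by (rewrite <- app_assoc; reflexivity).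
      apply cg_app_r. eapply cong_trans; [|exact Hz]. apply cg_app_r. apply cong_sym; exact H2.
    + intro H. exists (y ++ [s]). split.
      * apply IH. rewrite <- app_assoc. exact H.
      * simpl. exists y. split; apply cong_refl.
Qed.

Lemma rstep_Tr w w1 : rstep R w w1 -> forall x y, Tr w x y -> Tr w1 x y.
Proof.
  intros H. destruct H as [a b u Hu | a b u v u' v' Hu Hv Hr]; intros x y Hw.
  - apply Tr_app in Hw. destruct Hw as [m [Ha Hw]].
    apply Tr_app in Hw. destruct Hw as [m1 [Hi Hw]].
    apply Tr_app in Hw. destruct Hw as [m2 [Hp Hb]].
    apply Tr_inv in Hi. apply Tr_pos in Hp.
    apply Tr_app. exists m. split; [exact Ha|].
    eapply Tr_resp; [|apply cong_refl|exact Hb].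
    eapply cong_trans; [apply cong_sym; exact Hp|]. exact Hi.
  - apply Tr_app in Hw. destruct Hw as [m [Ha Hw]].
    apply Tr_app in Hw. destruct Hw as [m1 [Hi Hw]].
    apply Tr_app in Hw. destruct Hw as [m2 [Hp Hb]].
    apply Tr_inv in Hi. apply Tr_pos in Hp.
    apply Tr_app. exists m. split; [exact Ha|].
    apply Tr_app. exists (m ++ v'). split; [apply Tr_pos; apply cong_refl|].
    apply Tr_app. exists m2. split; [|exact Hb].
    apply Tr_inv.
    eapply cong_trans. { apply cg_app_r. apply cong_sym. exact Hp. }
    apply cong_sym.
    eapply cong_trans. { apply cg_app_r. apply cong_sym. exact Hi. }
    rewrite <- app_assoc, <- app_assoc. apply cg_app_l.
    destruct Hr as [Hr|Hr]; [apply cong_base; exact Hr| apply cong_sym; apply cong_base; exact Hr].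
Qed.

Lemma reverses_Tr w w1 : reverses R w w1 -> forall x y, Tr w x y -> Tr w1 x y.
Proof.
  induction 1; intros x y H'; auto. apply IHreverses. eapply rstep_Tr; eauto.
Qed.

Lemma rstep_ctx w w1 c d : rstep R w w1 -> rstep R (c ++ w ++ d) (c ++ w1 ++ d).
Proof.
  intro H. destruct H as [a b u Hu | a b u v u' v' Hu Hv Hr].
  - replace (c ++ (a ++ inv u ++ pos u ++ b) ++ d) with ((c ++ a) ++ inv u ++ pos u ++ (b ++ d))
      by (repeat rewrite <- app_assoc; reflexivity).
    replace (c ++ (a ++ b) ++ d) with ((c ++ a) ++ (b ++ d)) by (repeat rewrite <- app_assoc; reflexivity).
    constructor; auto.
  - replace (c ++ (a ++ inv u ++ pos v ++ b) ++ d) with ((c ++ a) ++ inv u ++ pos v ++ (b ++ d))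
      by (repeat rewrite <- app_assoc; reflexivity).
    replace (c ++ (a ++ pos v' ++ inv u' ++ b) ++ d) with ((c ++ a) ++ pos v' ++ inv u' ++ (b ++ d))
      by (repeat rewrite <- app_assoc; reflexivity).
    constructor; auto.
Qed.

Lemma reverses_ctx w w1 c d : reverses R w w1 -> reverses R (c ++ w ++ d) (c ++ w1 ++ d).
Proof.
  induction 1. apply rev_refl. eapply rev_step; [apply rstep_ctx; eauto | eauto].
Qed.

Lemma reverses_trans w1 w2 w3 : reverses R w1 w2 -> reverses R w2 w3 -> reverses R w1 w3.
Proof. induction 1; intros; auto. eapply rev_step; eauto. Qed.

Lemma reverses_del u b : reverses R (inv u ++ pos u ++ b) b.
Proof.
  destruct u as [|s u]. { apply rev_refl. }
  eapply rev_step; [|apply rev_refl].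
  pose proof (@rstep_del S R [] b (s :: u)) as H. simpl in H. apply H. discriminate.
Qed.

Lemma inv_app (u v : list S) : inv (u ++ v) = inv v ++ inv u.
Proof. unfold inv. rewrite map_app, rev_app_distr. reflexivity. Qed.
Lemma pos_app (u v : list S) : pos (u ++ v) = pos u ++ pos v.
Proof. unfold pos. apply map_app. Qed.

End Aux.

Theorem proposition6p6 (S : Type) (R : list S -> list S -> Prop) :
  inhabited S ->
  (forall x y, R x y -> x <> [] /\ y <> []) ->
  r_complete R ->
  ((forall x y : list S, exists a b : list S, cong R (x ++ a) (y ++ b)) <->
   exists S' : list S -> Prop,
     (forall s : S, S' [s]) /\
     (forall u v, S' u -> S' v ->
        exists u' v', S' u' /\ S' v' /\
          reverses R (inv (u ++ v') ++ pos (v ++ u')) [])).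
Proof.
  intros _ _ Hc. split.
  - intros Hm. exists (fun _ => True). split; [auto|].
    intros u v _ _. destruct (Hm u v) as [a [b Hab]].
    destruct (Hc u v b a Hab) as [u'' [v'' [w [Hrev _]]]].
    exists u'', v''. split; [auto|]. split; [auto|].
    rewrite inv_app, pos_app.
    eapply reverses_trans.
    { pose proof (@reverses_ctx S R _ _ (inv v'') (pos u'') Hrev) as H.
      repeat rewrite <- app_assoc in H. repeat rewrite <- app_assoc. exact H. }
    try rewrite <- app_assoc.
    eapply reverses_trans. { apply reverses_del. }
    pose proof (@reverses_del S R u'' []) as H. rewrite app_nil_r in H. exact H.
  - intros [S' [Hs Hp]].
    assert (Hsnd : forall u v u' v', reverses R (inv (u ++ v') ++ pos (v ++ u')) [] ->
                     cong R (u ++ v') (v ++ u')).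
    { intros u v u' v' H.
      assert (T : Tr S R (inv (u ++ v') ++ pos (v ++ u')) (u ++ v') (v ++ u')).
      { apply Tr_app. exists []. split.
        - apply Tr_inv. apply cong_refl.
        - apply Tr_pos. apply cong_refl. }
      exact (@reverses_Tr S R _ _ H _ _ T). }
    assert (A : forall x v, S' v -> exists v' y, S' v' /\ cong R (x ++ v') (v ++ y)).
    { induction x as [|s x IH]; intros v Hv.
      - exists v, []. rewrite app_nil_r. split; [exact Hv | apply cong_refl].
      - destruct (Hp [s] v (Hs s) Hv) as [u' [v' [Hu' [Hv' Hr]]]].
        apply Hsnd in Hr.
        destruct (IH v' Hv') as [v'' [y [Hv'' Hy]]].
        exists v'', (u' ++ y). split; [exact Hv''|].
        change (s :: x) with ([s] ++ x). rewrite <- app_assoc.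
        eapply cong_trans. { apply cg_app_l. exact Hy. }
        rewrite app_assoc. rewrite app_assoc. apply cg_app_r. exact Hr. }
    intros x y. revert x. induction y as [|s y IH]; intro x.
    + exists [], x. rewrite app_nil_r. apply cong_refl.
    + destruct (A x [s] (Hs s)) as [v' [z [_ Hz]]].
      destruct (IH z) as [a [b Hab]].
      exists (v' ++ a), b. rewrite app_assoc.
      eapply cong_trans. { apply cg_app_r. exact Hz. }
      change (s :: y) with ([s] ++ y). repeat rewrite <- app_assoc. apply cg_app_l. exact Hab.
Qed.
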